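(* For every dependency DAG $G$ in which every item has at most $k-1$ dependencies and every cache size $k\ge1$, the deterministic online algorithm Recursive LRU (described in the context) is $k$-competitive for online dependency-aware caching without bypassing, i.e., there is a constant $\alpha$ such that for every request sequence $\sigma$, its cost on $\sigma$ is at most $k\cdot\mathrm{OPT}(\sigma)+\alpha$.
   Context: Model: universe $\mathcal{U}$, DAG $G=(\mathcal{U},E)$, $T(x)$ = set of items reachable from $x$ in $G$ including $x$; each item has at most $k-1$ dependencies. A cache of at most $k$ items is feasible if it contains $T(x)$ for every cached $x$. Upon a request to $v$, the algorithm must make $T(v)$ cached by single-item fetches/evictions keeping the cache feasible after each operation; cost = number of fetches. All algorithms start from the same feasible initial cache; $\mathrm{OPT}(\sigma)$ is the optimal offline cost. $\tau$ is a fixed total order on $\mathcal{U}$ with $v<_\tau u$ whenever $v\in T(u)$, $v\neq u$. Algorithm Recursive LRU: it keeps a timestamp for each item, drawn from a strictly increasing global clock. On a request to $v$: first, for each $w\in T(v)$ in decreasing $\tau$-order (top to bottom), assign $w$ the next timestamp (so every item of $T(v)$ gets a more recent timestamp than before, and descendants get more recent timestamps than their ancestors within $T(v)$). Second, for each $w\in T(v)$ in increasing $\tau$-order (bottom to top), if $w$ is not cached: if the cache holds $k$ items, evict the cached item with the least recent timestamp; then fetch $w$. This is the classic LRU rule applied to all items of $T(v)$. *)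

(* Defs.v *)
From mathcomp Require Import all_boot.
Set Implicit Arguments. Unset Strict Implicit. Unset Printing Implicit Defensive.

Section Model.
Variable U : finType.
Variable E : rel U.          (* E x y : y is a (direct) dependency of x *)

Definition T (x : U) : {set U} := [set y | connect E x y].

Definition acyclic : Prop := forall x y, E x y -> ~~ connect E y x.

Definition feasible (k : nat) (C : {set U}) : bool :=
  (#|C| <= k) && [forall x in C, T x \subset C].

Inductive op := Fetch of U | Evict of U.

Definition apply_op (C : {set U}) (o : op) : {set U} :=
  match o with Fetch w => w |: C | Evict w => C :\ w end.

Definition is_fetch (o : op) : bool := if o is Fetch _ then true else false.

Definition run_ops (C : {set U}) (ops : seq op) : {set U} := foldl apply_op C ops.

Fixpoint ops_feasible (k : nat) (C : {set U}) (ops : seq op) : bool :=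
  match ops with
  | [::] => true
  | o :: os => feasible k (apply_op C o) && ops_feasible k (apply_op C o) os
  end.

(* S (one list of operations per request) serves sigma from cache C:
   feasibility after each operation, and T(v) cached after serving request v *)
Fixpoint serves (k : nat) (C : {set U}) (sigma : seq U) (S : seq (seq op)) : bool :=
  match sigma, S with
  | [::], [::] => true
  | v :: s, ops :: S' =>
      [&& ops_feasible k C ops, T v \subset run_ops C ops & serves k (run_ops C ops) s S']
  | _, _ => false
  end.

Definition cost (S : seq (seq op)) : nat := sumn [seq count is_fetch ops | ops <- S].

Definition stamp (ts : U -> nat) (t : nat) (s : seq U) : (U -> nat) * nat :=
  foldl (fun p w => ((fun u => if u == w then p.2 else p.1 u), p.2.+1)) (ts, t) s.

Definition lru_victim (ts : U -> nat) (C : {set U}) : option U :=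
  [pick u in C | [forall u' in C, ts u <= ts u']].

Definition load_one (k : nat) (ts : U -> nat) (p : {set U} * seq op) (w : U)
  : {set U} * seq op :=
  if w \in p.1 then p else
  let ev := if #|p.1| == k then
              (if lru_victim ts p.1 is Some u then [:: Evict u] else [::])
            else [::] in
  let C' := run_ops p.1 ev in
  (w |: C', p.2 ++ ev ++ [:: Fetch w]).

Record lru_state := LruState { st_cache : {set U}; st_ts : U -> nat; st_clock : nat }.

Definition rlru_step (k : nat) (tau : U -> nat) (st : lru_state) (v : U)
  : lru_state * seq op :=
  let top_down := sort (fun a b => tau b <= tau a) (enum (T v)) in
  let '(ts', t') := stamp (st_ts st) (st_clock st) top_down in
  let '(C', ops) := foldl (load_one k ts') (st_cache st, [::]) (rev top_down) in
  (LruState C' ts' t', ops).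

Fixpoint rlru_from (k : nat) (tau : U -> nat) (st : lru_state) (sigma : seq U)
  : seq (seq op) :=
  match sigma with
  | [::] => [::]
  | v :: s => let p := rlru_step k tau st v in p.2 :: rlru_from k tau p.1 s
  end.

Definition rlru (k : nat) (tau : U -> nat) (C0 : {set U}) (ts0 : U -> nat)
  (sigma : seq U) : seq (seq op) :=
  rlru_from k tau (LruState C0 ts0 (\max_(u : U) ts0 u).+1) sigma.

End Model.

(* Main.v *)
Require Import Defs.
From mathcomp Require Import all_boot zify.
Set Implicit Arguments. Unset Strict Implicit. Unset Printing Implicit Defensive.

Section Gen.
Variable U : finType.
Variable E : rel U.

Lemma ops_feasible_cat k (C : {set U}) o1 o2 :
  ops_feasible E k C (o1 ++ o2) =
  ops_feasible E k C o1 && ops_feasible E k (run_ops C o1) o2.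
Proof.
elim: o1 C => [|o os IH] C //=.
by rewrite IH andbA.
Qed.

Lemma ops_feasible_card k (C : {set U}) (ops : seq (op U)) :
  #|C| <= k -> ops_feasible E k C ops -> #|run_ops C ops| <= k.
Proof.
elim: ops C => [|o os IH] C //= HC /andP[/andP[Hf _] Hr].
exact: IH.
Qed.

Lemma nofetch_sub (C : {set U}) (ops : seq (op U)) :
  count (@is_fetch U) ops = 0 -> run_ops C ops \subset C.
Proof.
elim: ops C => [|o os IH] C /=; first by [].
case: o => w //= H.
apply: subset_trans (IH _ H) _; exact: subsetDl.
Qed.

Fixpoint nph k (A : {set U}) (s : seq U) : nat :=
  match s with
  | [::] => 0
  | v :: s' => if #|A :|: T E v| <= k then nph k (A :|: T E v) s'
               else (nph k (T E v) s').+1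
  end.

Lemma cost_cons (ops : seq (op U)) S : cost (ops :: S) = count (@is_fetch U) ops + cost S.
Proof. by []. Qed.

Lemma opt_lb k sigma : forall (C A : {set U}) S,
  #|C| <= k -> serves E k C sigma S -> nph k A sigma <= cost S + (k < #|A :|: C|).
Proof.
elim: sigma => [|v s IH] C A [|ops S] //= HC.
move=> /and3P[Hf Hsub Hs].
have HC' := ops_feasible_card HC Hf.
rewrite cost_cons.
case: (posnP (count (@is_fetch U) ops)) => Hcnt.
- have Hsub' := nofetch_sub C Hcnt.
  case: ifP => Hk.
  + apply: leq_trans (IH _ _ _ HC' Hs) _.
    rewrite Hcnt add0n leq_add2l.
    have : #|A :|: T E v :|: run_ops C ops| <= #|A :|: C|.
      apply: subset_leq_card; apply/subsetP => x.
      rewrite !in_setU => /orP[/orP[->|]|] //.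
        by move=> /(subsetP Hsub) /(subsetP Hsub') ->; rewrite orbT.
      by move=> /(subsetP Hsub') ->; rewrite orbT.
    case: (ltnP k #|A :|: T E v :|: run_ops C ops|) => //= H1 H2.
    by rewrite (leq_trans H1 H2).
  + have : #|A :|: T E v| <= #|A :|: C|.
      apply: subset_leq_card; apply/subsetP => x.
      rewrite !in_setU => /orP[->|] //.
      by move=> /(subsetP Hsub) /(subsetP Hsub') ->; rewrite orbT.
    move=> H1.
    have -> : k < #|A :|: C| by apply: leq_trans H1; rewrite ltnNge Hk.
    have : nph k (T E v) s <= cost S + (k < #|T E v :|: run_ops C ops|) by exact: IH.
    have -> : T E v :|: run_ops C ops = run_ops C ops by apply/setUidPr.
    rewrite ltnNge HC' addn0 Hcnt; lia.
- case: ifP => Hk.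
  + apply: leq_trans (IH _ _ _ HC' Hs) _.
    case: (k < _); case: (k < _); lia.
  + have := IH _ (T E v) S HC' Hs.
    have -> : T E v :|: run_ops C ops = run_ops C ops by apply/setUidPr.
    rewrite ltnNge HC' addn0.
    case: (k < _) => /=; lia.
Qed.
End Gen.

Section Gen2.
Variable U : finType.
Variable E : rel U.

Lemma feasibleP k (D : {set U}) :
  reflect (#|D| <= k /\ forall x, x \in D -> T E x \subset D) (feasible E k D).
Proof.
apply: (iffP andP) => [[H1 /forall_inP H2]|[H1 H2]]; split => //.
by apply/forall_inP.
Qed.

Lemma stamp_spec (ts : U -> nat) t s : uniq s ->
  (forall u, (stamp ts t s).1 u = if u \in s then t + index u s else ts u) /\
  (stamp ts t s).2 = t + size s.
Proof.
elim: s ts t => [|w s IH] ts t /=; first by split => //; rewrite addn0.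
case/andP => Hw Hu.
have [H1 H2] := IH (fun u => if u == w then t else ts u) t.+1 Hu.
rewrite /stamp /= in H1 H2 *.
split; last by rewrite H2 addSnnS.
move=> u; rewrite H1 in_cons.
case: (eqVneq u w) => [->|Huw] /=; first by rewrite (negPf Hw) addn0.
by case: (u \in s) => //; rewrite addSnnS.
Qed.

Lemma victim_spec (ts : U -> nat) (D : {set U}) : D != set0 ->
  exists u, lru_victim ts D = Some u /\ u \in D /\ forall u', u' \in D -> ts u <= ts u'.
Proof.
move=> /set0Pn[d Hd].
rewrite /lru_victim; case: pickP => [u /andP[Hu /forall_inP Hmin]|Hnone].
  by exists u; split => //; split.
exfalso.
case: (arg_minnP (fun u => ts u) Hd) => u Hu Hmin.
have := Hnone u; rewrite (Hu : u \in D) /=.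
by move/negbT/negP; apply; apply/forall_inP.
Qed.

Definition LInv (k : nat) (C B : {set U}) (ts : U -> nat) (pre : seq U)
  (p : {set U} * seq (op U)) : Prop :=
  run_ops C p.2 = p.1 /\ ops_feasible E k C p.2 /\ feasible E k p.1 /\
  (forall x y, x \in p.1 -> y \in T E x -> y != x -> ts x < ts y) /\
  (forall b c, b \in p.1 -> b \in B -> c \in p.1 -> c \notin B -> ts c < ts b) /\
  C :&: B \subset p.1 /\ {subset pre <= p.1} /\
  count (@is_fetch U) p.2 <= count (fun x => x \notin C) pre.

Lemma ops_feasible_cat2 k (C : {set U}) o1 o2 :
  ops_feasible E k C (o1 ++ o2) =
  ops_feasible E k C o1 && ops_feasible E k (run_ops C o1) o2.
Proof. by elim: o1 C => [|o os IH] C //=; rewrite IH andbA. Qed.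

Lemma load_fetch k (C B : {set U}) ts pre (D D1 : {set U}) ops ev w :
  LInv k C B ts pre (D, ops) ->
  w \notin D -> w \in B -> {subset pre <= B} ->
  {subset T E w :\ w <= pre} ->
  (forall y, y \in T E w -> y != w -> ts w < ts y) ->
  (forall c, c \notin B -> ts c < ts w) ->
  run_ops D ev = D1 -> ops_feasible E k D ev -> count (@is_fetch U) ev = 0 ->
  D1 \subset D -> #|D1| < k ->
  (forall x, x \in D -> x \notin D1 -> x \notin B) ->
  (forall x, x \in D1 -> T E x \subset D1) ->
  LInv k C B ts (rcons pre w) (w |: D1, ops ++ ev ++ [:: Fetch w]).
Proof.
move=> [Hrun [Hof [Hfe [HI2 [Hsep [HCB [Hpre Hcnt]]]]]]] /=.
move=> HwD HwB HpreB HTw Hstw Hsepw Hev Hoev Hcev HD1 HD1k HDB Hcl1.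
have HwC : w \notin C.
  apply/negP => HwC; move/negP: HwD; apply.
  by apply: (subsetP HCB); rewrite inE HwC HwB.
have Hpre1 : {subset pre <= D1}.
  move=> x Hx; have HxD := Hpre x Hx.
  apply/negPn/negP => Hn; have := HDB x HxD Hn; by rewrite HpreB.
have Hfeas2 : feasible E k (w |: D1).
  apply/feasibleP; split.
    by rewrite cardsU1; case: (w \notin D1) => /=; lia.
  move=> x; rewrite in_setU1 => /orP[/eqP->|Hx].
    apply/subsetP => y Hy.
    case: (eqVneq y w) => [->|Hyw]; first by rewrite setU11.
    by rewrite in_setU1 Hpre1 ?orbT //; apply: HTw; rewrite in_setD1 Hyw.
  apply: subset_trans (Hcl1 x Hx) _; exact: subsetUr.
split.
  by rewrite /run_ops !foldl_cat -/(run_ops C ops) Hrun -/(run_ops D ev) Hev.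
split.
  rewrite !ops_feasible_cat2 Hof Hrun Hoev /= andbT.
  by rewrite -/(run_ops D ev) Hev.
split => //.
split.
  move=> x y; rewrite in_setU1 => /orP[/eqP->|Hx]; first exact: Hstw.
  by apply: HI2; apply: (subsetP HD1).
split.
  move=> b c; rewrite !in_setU1 => /orP[/eqP->|Hb] HbB /orP[/eqP->|Hc] HcB.
  - by rewrite HwB in HcB.
  - exact: Hsepw.
  - by rewrite HwB in HcB.
  - by apply: Hsep => //; apply: (subsetP HD1).
split.
  apply/subsetP => x Hx; rewrite in_setU1; apply/orP; right.
  have HxD := subsetP HCB x Hx.
  apply/negPn/negP => Hn; have := HDB x HxD Hn.
  by move: Hx; rewrite in_setI => /andP[_ ->].
split.
  move=> x; rewrite -cats1 mem_cat => /orP[Hx|]; first by rewrite in_setU1 Hpre1 ?orbT.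
  by rewrite inE => /eqP->; rewrite setU11.
by rewrite !count_cat Hcev /= -cats1 count_cat /= HwC /= !addn0 add0n leq_add2r.
Qed.

Lemma load_step k (C B : {set U}) ts pre p w :
  0 < k -> #|B| <= k ->
  LInv k C B ts pre p ->
  w \in B -> {subset pre <= B} ->
  {subset T E w :\ w <= pre} ->
  (forall y, y \in T E w -> y != w -> ts w < ts y) ->
  (forall c, c \notin B -> ts c < ts w) ->
  LInv k C B ts (rcons pre w) (load_one k ts p w).
Proof.
case: p => D ops Hk HB Hinv HwB HpreB HTw Hstw Hsepw.
rewrite /load_one /=.
case: ifP => HwD.
  move: Hinv => [Hrun [Hof [Hfe [HI2 [Hsep [HCB [Hpre Hcnt]]]]]]] /=.
  do 6 (split => //).
  split.
    by move=> x; rewrite -cats1 mem_cat => /orP[/Hpre //|]; rewrite inE => /eqP->.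
  rewrite -cats1 count_cat /=; apply: leq_trans Hcnt _; exact: leq_addr.
have Hinv' := Hinv.
move: Hinv' => [Hrun [Hof [Hfe [HI2 [Hsep [HCB [Hpre Hcnt]]]]]]] /=.
move/feasibleP: Hfe => [HDk HDcl].
have HwD' : w \notin D by rewrite HwD.
case: eqP => HDeq.
- have HD0 : D != set0 by apply/set0Pn/card_gt0P; rewrite HDeq.
  have [u [Hv [Hu Hmin]]] := victim_spec ts HD0.
  rewrite Hv.
  have HuB : u \notin B.
    apply/negP => HuB.
    have HDB : w |: D \subset B.
      apply/subsetP => x; rewrite in_setU1 => /orP[/eqP->//|Hx].
      apply/negPn/negP => HxB.
      have := Hsep u x Hu HuB Hx HxB; have := Hmin x Hx; lia.
    have := subset_leq_card HDB; rewrite cardsU1 HwD' HDeq; lia.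
  have Hcl : forall x, x \in D :\ u -> T E x \subset D :\ u.
    move=> x; rewrite in_setD1 => /andP[Hxu Hx].
    apply/subsetP => y Hy; rewrite in_setD1 (subsetP (HDcl x Hx)) // andbT.
    apply/negP => /eqP Hyu; subst y.
    have := HI2 x u Hx Hy; rewrite eq_sym Hxu => /(_ isT); have := Hmin x Hx; lia.
  have Hcard : #|D :\ u| < k by have := cardsD1 u D; rewrite Hu HDeq; lia.
  apply: (load_fetch (D1 := D :\ u) (ev := [:: Evict u]) Hinv HwD' HwB HpreB HTw Hstw Hsepw) => //.
  + apply/andP; split => //; apply/feasibleP; split => //; exact: ltnW.
  + exact: subsetDl.
  + by move=> x Hx; rewrite in_setD1 Hx andbT negbK => /eqP->.
- apply: (load_fetch (D1 := D) (ev := [::]) Hinv HwD' HwB HpreB HTw Hstw Hsepw) => //.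
  + by rewrite ltn_neqAle HDk andbT; apply/eqP.
  + by move=> x ->.
Qed.

End Gen2.

Section Gen3.
Variable U : finType.
Variable E : rel U.

Lemma load_fold k (C B : {set U}) ts (L : seq U) :
  0 < k -> #|B| <= k -> {subset L <= B} ->
  (forall pre' w rest, L = pre' ++ w :: rest -> {subset T E w :\ w <= pre'}) ->
  (forall w, w \in L -> forall y, y \in T E w -> y != w -> ts w < ts y) ->
  (forall w, w \in L -> forall c, c \notin B -> ts c < ts w) ->
  forall l pre p, pre ++ l = L -> LInv E k C B ts pre p ->
  LInv E k C B ts L (foldl (load_one k ts) p l).
Proof.
move=> Hk HB HLB Hdec Hstw Hsepw.
elim=> [|w l IH] pre p HL Hinv /=; first by rewrite cats0 in HL; subst.
have HwL : w \in L by rewrite -HL mem_cat mem_head orbT.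
apply: (IH (rcons pre w)); first by rewrite cat_rcons.
apply: load_step => //.
- exact: HLB.
- by move=> x Hx; apply: HLB; rewrite -HL mem_cat Hx.
- exact: (Hdec pre w l).
- exact: Hstw.
- exact: Hsepw.
Qed.

Definition RInv k (st : lru_state U) (A : {set U}) : Prop :=
  feasible E k (st_cache st) /\
  (forall x y, x \in st_cache st -> y \in T E x -> y != x -> st_ts st x < st_ts st y) /\
  (forall u, st_ts st u < st_clock st) /\
  A \subset st_cache st /\ #|A| <= k /\
  (forall a c, a \in A -> c \in st_cache st -> c \notin A -> st_ts st c < st_ts st a).

Lemma T_trans x y z : y \in T E x -> z \in T E y -> z \in T E x.
Proof. rewrite !inE; exact: connect_trans. Qed.

Lemma rstep k tau st A v (B : {set U}) :
  0 < k -> (forall u w, w \in T E u -> w != u -> tau w < tau u) ->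
  #|T E v| <= k -> RInv k st A ->
  B = T E v \/ (B = A :|: T E v /\ #|A :|: T E v| <= k) ->
  ops_feasible E k (st_cache st) (rlru_step E k tau st v).2 /\
  run_ops (st_cache st) (rlru_step E k tau st v).2 = st_cache (rlru_step E k tau st v).1 /\
  T E v \subset st_cache (rlru_step E k tau st v).1 /\
  count (@is_fetch U) (rlru_step E k tau st v).2 <= #|T E v :\: st_cache st| /\
  RInv k (rlru_step E k tau st v).1 B.
Proof.
move=> Hk Htau HTv [HI1 [HI2 [HI3 [HI4 [HI4' HI5]]]]] HBcase.
case: st HI1 HI2 HI3 HI4 HI5 => C ts t /= HI1 HI2 HI3 HI4 HI5.
rewrite /rlru_step /=.
set top := sort _ _.
have Huniq : uniq top by rewrite sort_uniq enum_uniq.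
have Hmem : forall x, (x \in top) = (x \in T E v) by move=> x; rewrite mem_sort mem_enum.
have Hsort : sorted (fun a b => tau b <= tau a) top.
  by apply: sort_sorted => a b; exact: leq_total.
have [Hst1 Hst2] := stamp_spec ts t Huniq.
case Es: (stamp ts t top) Hst1 Hst2 => [ts' t'] /= Hts Ht.
have HvB : T E v \subset B.
  by case: HBcase => [->|[-> _]] //; exact: subsetUr.
have HBk : #|B| <= k by case: HBcase => [->|[-> ->]].
have key0 : forall u, u \notin T E v -> ts' u = ts u.
  by move=> u Hu; rewrite Hts Hmem (negPf Hu).
have key1 : forall x y, x \in T E v -> y \notin T E v -> ts' y < ts' x.
  move=> x y Hx Hy; rewrite key0 // Hts Hmem Hx.
  by apply: leq_trans (HI3 y) _; exact: leq_addr.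
have Rtr : transitive (fun a b => tau b <= tau a).
  by move=> a b c H1 H2; exact: leq_trans H2 H1.
have key2 : forall x y, x \in T E v -> y \in T E v -> tau y < tau x -> ts' x < ts' y.
  move=> x y Hx Hy Hxy; rewrite !Hts !Hmem Hx Hy ltn_add2l.
  rewrite -!Hmem in Hx Hy.
  case: (ltngtP (index x top) (index y top)) => // H.
  - have := sorted_ltn_index Rtr Hsort y x Hy Hx H; rewrite leqNgt Hxy.
    by [].
  - have Hxy' := index_inj x Hx Hy H; subst y; by rewrite ltnn in Hxy.
have Hlt : forall x y, x \in T E v -> y \in T E x -> y != x -> ts' x < ts' y.
  move=> x y Hx Hy Hyx; apply: key2 => //; first exact: T_trans Hy.
  exact: Htau.
have Hinit : LInv E k C B ts' [::] (C, [::]).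
  split => //; split => //; split => //.
  split.
    move=> x y /= Hx Hy Hyx.
    case HxT: (x \in T E v); first exact: Hlt.
    rewrite (key0 x) ?HxT //.
    case HyT: (y \in T E v); last by rewrite key0 ?HyT //; exact: HI2.
    by rewrite -(key0 x) ?HxT //; apply: key1; rewrite ?HyT ?HxT.
  split.
    move=> b c /= Hb HbB Hc HcB.
    have HcT : c \notin T E v by apply/negP => /(subsetP HvB); rewrite (negPf HcB).
    case HbT: (b \in T E v); first exact: key1.
    move: HBcase => [HBv|[HBv _]]; first by rewrite HBv HbT in HbB.
    rewrite HBv in_setU HbT orbF in HbB.
    rewrite !key0 ?HbT //.
    apply: HI5 => //.
    by move: HcB; rewrite HBv in_setU negb_or => /andP[].
  split; first exact: subsetIl.
  by split.
set L := rev top.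
have HmemL : forall x, (x \in L) = (x \in T E v) by move=> x; rewrite mem_rev Hmem.
have HsortL : sorted (fun a b => tau a <= tau b) L by rewrite rev_sorted.
have Hfold := @load_fold k C B ts' L Hk HBk.
have Hh1 : {subset L <= B} by move=> x; rewrite HmemL => /(subsetP HvB).
have Hh2 : forall pre' w rest, L = pre' ++ w :: rest -> {subset T E w :\ w <= pre'}.
  move=> pre' w rest HL y; rewrite in_setD1 => /andP[Hyw Hy].
  have HwL : w \in L by rewrite HL mem_cat mem_head orbT.
  have HyL : y \in L by rewrite HmemL; apply: T_trans Hy; rewrite -HmemL.
  have Hlty : tau y < tau w by apply: Htau.
  move: HyL; rewrite HL mem_cat => /orP[//|]; rewrite in_cons (negPf Hyw) /= => Hyr.
  move: HsortL; rewrite HL sorted_cat_cons => /andP[_ Hp].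
  have := order_path_min (fun a b c (H1 : tau b <= tau a) (H2 : tau a <= tau c) => leq_trans H1 H2) Hp => /allP /(_ y Hyr).
  by rewrite leqNgt Hlty.
have Hh3 : forall w, w \in L -> forall y, y \in T E w -> y != w -> ts' w < ts' y.
  by move=> w; rewrite HmemL => Hw y Hy Hyw; apply: Hlt.
have Hh4 : forall w, w \in L -> forall c, c \notin B -> ts' c < ts' w.
  move=> w; rewrite HmemL => Hw c HcB; apply: key1 => //.
  by apply/negP => /(subsetP HvB); rewrite (negPf HcB).
have := Hfold Hh1 Hh2 Hh3 Hh4 L [::] (C, [::]) erefl Hinit.
case Ef: (foldl _ _ _) => [C' ops] /=.
move=> [Hrun [Hof [Hfe [HJ2 [Hsep [HCB [Hpre Hcnt]]]]]]] /=.
rewrite /= in Hrun Hof Hfe HJ2 Hsep HCB Hpre Hcnt.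
have HvC : T E v \subset C' by apply/subsetP => x; rewrite -HmemL; exact: Hpre.
have HBC : B \subset C'.
  case: HBcase => [->//|[HBe _]].
  rewrite {1}HBe subUset HvC andbT.
  apply: subset_trans _ HCB; rewrite subsetI HI4 HBe /=; exact: subsetUl.
split => //; split => //; split => //.
split.
  apply: leq_trans Hcnt _.
  rewrite -size_filter cardE; apply: uniq_leq_size.
    by rewrite filter_uniq // rev_uniq.
  move=> x; rewrite mem_filter mem_enum in_setD HmemL => /andP[-> ->].
  by [].
split => //; split => //; split.
  move=> u /=; rewrite Ht Hts Hmem.
  case: ifP => Hu; first by rewrite ltn_add2l index_mem Hmem.
  by apply: leq_trans (HI3 u) _; exact: leq_addr.
split => //; split => //.
move=> a c Ha Hc HcB; apply: Hsep => //; exact: (subsetP HBC).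
Qed.
End Gen3.

Section Gen4.
Variable U : finType.
Variable E : rel U.

Lemma rlru_main k tau :
  0 < k -> (forall u w, w \in T E u -> w != u -> tau w < tau u) ->
  (forall x, #|T E x| <= k) ->
  forall sigma (st : lru_state U) A, RInv E k st A ->
  serves E k (st_cache st) sigma (rlru_from E k tau st sigma) /\
  cost (rlru_from E k tau st sigma) + #|A| <= k * nph E k A sigma + k.
Proof.
move=> Hk Htau HTk.
elim=> [|v s IH] st A Hinv.
  split => //; move: Hinv => [_ [_ [_ [_ [HA _]]]]]; rewrite /= muln0 add0n; exact: HA.
have HA : A \subset st_cache st by move: Hinv => [_ [_ [_ [HA _]]]].
have HAk : #|A| <= k by move: Hinv => [_ [_ [_ [_ [HA' _]]]]].
rewrite [rlru_from _ _ _ _ _]/= cost_cons [nph _ _ _ _]/=.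
case: ifP => Hk2.
- have [Hof [Hrun [Hsub [Hcnt Hinv']]]] :=
    rstep (B := A :|: T E v) Hk Htau (HTk v) Hinv (or_intror (conj erefl Hk2)).
  have [IH1 IH2] := IH _ _ Hinv'.
  split; first by rewrite /= Hof Hrun Hsub IH1.
  have Hc : count (@is_fetch U) (rlru_step E k tau st v).2 + #|A| <= #|A :|: T E v|.
    apply: leq_trans (_ : #|T E v :\: st_cache st| + #|A| <= _).
      by rewrite leq_add2r.
    rewrite addnC -cardsUI.
    have -> : A :&: (T E v :\: st_cache st) = set0.
      apply/setP => x; rewrite !inE.
      case Hx: (x \in A) => //=.
      by rewrite (subsetP HA x Hx).
    rewrite cards0 addn0; apply: subset_leq_card; apply: setUS; exact: subsetDl.
  lia.
- have [Hof [Hrun [Hsub [Hcnt Hinv']]]] :=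
    rstep (B := T E v) Hk Htau (HTk v) Hinv (or_introl erefl).
  have [IH1 IH2] := IH _ _ Hinv'.
  split; first by rewrite /= Hof Hrun Hsub IH1.
  have Hc2 : #|T E v :\: st_cache st| <= #|T E v| by apply: subset_leq_card; exact: subsetDl.
  nia.
Qed.
End Gen4.

Theorem mainTheorem7 (U : finType) (E : rel U) (k : nat) (tau : U -> nat)
  (C0 : {set U}) (ts0 : U -> nat) :
  acyclic E ->
  0 < k ->
  (forall x : U, #|T E x :\ x| <= k.-1) ->
  injective tau ->
  (forall u v : U, v \in T E u -> v != u -> tau v < tau u) ->
  feasible E k C0 ->
  injective ts0 ->
  (forall x y : U, x \in C0 -> y \in T E x -> y != x -> ts0 x < ts0 y) ->
  exists alpha : nat, forall sigma : seq U,
    serves E k C0 sigma (rlru E k tau C0 ts0 sigma) /\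
    (forall S : seq (seq (op U)), serves E k C0 sigma S ->
       cost (rlru E k tau C0 ts0 sigma) <= k * cost S + alpha).
Proof.
move=> _ Hk HTx _ Htau HC0 _ Hts0.
have HTk : forall x, #|T E x| <= k.
  move=> x; rewrite (cardsD1 x) inE connect0; have := HTx x; lia.
have HC0k : #|C0| <= k by case/andP: HC0.
exists k => sigma.
set st0 := LruState C0 ts0 (\max_(u : U) ts0 u).+1.
have Hinv : RInv E k st0 set0.
  split => //; split => //; split.
    by move=> u /=; rewrite ltnS; exact: (leq_bigmax u).
  split; first exact: sub0set.
  by rewrite cards0; split => // a c; rewrite inE.
have [H1 H2] := rlru_main Hk Htau HTk sigma Hinv.
split; first exact: H1.
move=> S HS.
have := opt_lb set0 HC0k HS; rewrite set0U ltnNge HC0k addn0 => Hn.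
rewrite cards0 addn0 in H2.
apply: leq_trans H2 _; rewrite leq_add2r; exact: leq_mul.
Qed.
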